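(* Consider Algorithm AUX with parameter $t_0$ on an instance satisfying the standing assumption, with an edge labeling as in the context. For every offline vertex $u$ and every $t\in[0,1]$, we have $f_u(t)\le f(t)$.
   Context: **Model.** Poisson arrival model. Each online type $i$ independently arrives according to a Poisson process of rate $\lambda_i$ on $[0,1]$. On arrival, a vertex is immediately and irrevocably matched to an unmatched offline neighbor or discarded. Each offline vertex is matched at most once. The instance is a bipartite graph $(I,J,E)$ with rates $\lambda_i>0$. **Standing assumption.** There are values $x_{ij}\ge0$ (an optimal Jaillet–Lu LP solution) with $\sum_i x_{ij}=1$ for all $j$, and each type is one of two kinds: - first-class: one neighbor $j$, with $x_{ij}=\lambda_i$; - second-class: two neighbors $j_1,j_2$, with $x_{ij_1}=x_{ij_2}=\lambda_i/2$. **Labeling.** Each edge is labeled first-class or second-class. Edges of first-class types are labeled first-class. For every $j$, the first-class-labeled edges at $j$ have total $x$-value $1-\ln2$. **Reference process.** $H$ has offline vertices $a,b$; a type of rate $2\ln2$ adjacent to both; and types of rate $1-\ln2$ adjacent only to $a$, resp. only to $b$. Algorithm RES with parameter $t_0$ works as follows: - single-neighbor arrivals are matched if their neighbor is unmatched; - a two-neighbor arrival at time $t>t_0$ with an unmatched neighbor is matched to a uniformly random unmatched neighbor. On $H$ under RES, $f(t)$ is the probability that a given offline vertex is matched by time $t$, $g(t)$ the probability both are, and $\bar g=1-g$. **Algorithm AUX (parameter $t_0$).** Under AUX: - $f_u(t)$ is the probability that offline $u$ is matched by time $t$, and $\bar f_u=1-f_u$; - $g'_{u,v}(t)$ is the probability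 that both $u$ and $v$ are unmatched at time $t$. Edges are used only if their offline endpoint is unmatched. - A first-class arrival is matched to its neighbor if possible. - A second-class arrival of type $i$ with neighbors $u,v$ chooses at most one edge, with disjoint probabilities: - each first-class-labeled edge $(i,u)$ with probability $1/2$; - if the arrival time is $t>t_0$, each second-class-labeled edge $(i,u)$ with probability $\frac12\min\{\bar g(t)/(2\bar f_u(t)-g'_{u,v}(t)),1\}$ if $v$ is unmatched, or $\min\{\bar g(t)/(2\bar f_u(t)-g'_{u,v}(t)),1\}$ if $v$ is matched. *)

(* Defs.v *)
From HB Require Import structures.
From mathcomp Require Import all_boot all_order all_algebra.
From mathcomp Require Import all_classical all_reals all_analysis.
Set Implicit Arguments. Unset Strict Implicit. Unset Printing Implicit Defensive.
Import Order.TTheory GRing.Theory Num.Theory.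
Import numFieldNormedType.Exports.

Local Open Scope ring_scope.

Section Defs.
Variable R : realType.

(* ---------- Continuous-time chains on "set of matched offline vertices" ----------
   A state is the set S of offline vertices already matched.  A rate function
   r t S j (for j \notin S) is the rate at which, at time t in state S, vertex j
   becomes matched (the only possible transitions are S -> S :|: [set j]).
   p t S is the probability of being in state S at time t.  The law of the
   process is characterized by the Kolmogorov forward equation. *)

Definition fwd_rhs (J : finType) (r : {set J} -> J -> R) (q : {set J} -> R)
    (S : {set J}) : R :=
  \sum_(j in S) q (S :\ j) * r (S :\ j) j - q S * \sum_(j in ~: S) r S j.

(* p is the law on [0,1] of the chain with rates r started with nothing matched;
   rates may jump at time t0, where no derivative is required. *)
Definition is_law (J : finType) (r : R -> {set J} -> J -> R)
    (p : R -> {set J} -> R) (t0 : R) : Prop :=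
  (forall S, p 0 S = (S == finset.set0)%:R) /\
  (forall S, {within `[0, 1], continuous (fun s => p s S)}%classic) /\
  (forall S t, 0 < t < 1 -> t != t0 ->
      is_derive t 1 (fun s => p s S) (fwd_rhs (r t) (p t) S)).

(* ---------- Reference process H under RES ----------
   Offline vertices a = true, b = false.  Rates: the single-neighbor type of
   rate 1 - ln 2 at each vertex; the two-neighbor type of rate 2 ln 2, active
   for t > t0, matched uniformly among unmatched neighbors. *)
Definition res_rate (t0 : R) (t : R) (S : {set bool}) (j : bool) : R :=
  (1 - ln 2) +
  (if t0 < t then 2 * ln 2 * (if (~~ j) \in S then 1 else 1 / 2) else 0).

Definition fH (h : R -> {set bool} -> R) (t : R) : R :=
  \sum_(S : {set bool} | true \in S) h t S.
Definition gH (h : R -> {set bool} -> R) (t : R) : R := h t (finset.setT : {set bool}).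
Definition gbarH (h : R -> {set bool} -> R) (t : R) : R := 1 - gH h t.

Definition nbrs (I J : finType) (E : I -> J -> bool) (i : I) : {set J} :=
  [set j | E i j].

Definition first_class (I J : finType) (lam : I -> R) (E : I -> J -> bool)
    (x : I -> J -> R) (i : I) : Prop :=
  exists j, nbrs E i = [set j] /\ x i j = lam i.

Definition second_class (I J : finType) (lam : I -> R) (E : I -> J -> bool)
    (x : I -> J -> R) (i : I) : Prop :=
  exists j1 j2, j1 != j2 /\ nbrs E i = [set j1; j2] /\
    x i j1 = lam i / 2 /\ x i j2 = lam i / 2.

Definition standing_assumption (I J : finType) (lam : I -> R)
    (E : I -> J -> bool) (x : I -> J -> R) : Prop :=
  (forall i, 0 < lam i) /\
  (forall i j, 0 <= x i j) /\
  (forall i j, ~~ E i j -> x i j = 0) /\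
  (forall j, \sum_(i : I) x i j = 1) /\
  (forall i, first_class lam E x i \/ second_class lam E x i).

(* Edge labeling: lab i j = true means (i,j) is labeled first-class. *)
Definition labeling_ok (I J : finType) (lam : I -> R) (E : I -> J -> bool)
    (x : I -> J -> R) (lab : I -> J -> bool) : Prop :=
  (forall i j, first_class lam E x i -> E i j -> lab i j) /\
  (forall j, \sum_(i | E i j && lab i j) x i j = 1 - ln 2).

Definition fAux (J : finType) (p : R -> {set J} -> R) (u : J) (t : R) : R :=
  \sum_(S : {set J} | u \in S) p t S.
Definition fbarAux (J : finType) (p : R -> {set J} -> R) (u : J) (t : R) : R :=
  1 - fAux p u t.
Definition gpAux (J : finType) (p : R -> {set J} -> R) (u v : J) (t : R) : R :=
  \sum_(S : {set J} | (u \notin S) && (v \notin S)) p t S.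

Definition aux_m (J : finType) (h : R -> {set bool} -> R) (p : R -> {set J} -> R)
    (u v : J) (t : R) : R :=
  Order.min (gbarH h t / (2 * fbarAux p u t - gpAux p u v t)) 1.

(* probability that an arrival of type i at time t in state S (u \notin S)
   is matched to u *)
Definition aux_prob (I J : finType) (E : I -> J -> bool) (lab : I -> J -> bool)
    (t0 : R) (h : R -> {set bool} -> R) (p : R -> {set J} -> R)
    (t : R) (S : {set J}) (i : I) (u : J) : R :=
  if ~~ E i u then 0
  else if #|nbrs E i| == 1%N then 1
  else if lab i u then 1 / 2
  else if t0 < t then
    \sum_(v | E i v && (v != u))
       (if v \in S then aux_m h p u v t else 1 / 2 * aux_m h p u v t)
  else 0.

Definition aux_rate (I J : finType) (lam : I -> R) (E : I -> J -> bool)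
    (lab : I -> J -> bool) (t0 : R) (h : R -> {set bool} -> R)
    (p : R -> {set J} -> R) (t : R) (S : {set J}) (u : J) : R :=
  \sum_(i : I) lam i * aux_prob E lab t0 h p t S i u.

End Defs.

(* Main.v *)
Require Import Defs.
From HB Require Import structures.
From mathcomp Require Import all_boot all_order all_algebra.
From mathcomp Require Import all_classical all_reals all_analysis.
From mathcomp Require Import lra ring.
Import Order.TTheory GRing.Theory Num.Theory.
Import numFieldNormedType.Exports.
Local Open Scope ring_scope.

Section An.
Variable R : realType.

Lemma der_lin (c x : R) : is_derive x 1 (fun s : R => c * s) c.
Proof.
have := @is_deriveZ R R R id c x 1 1 (is_derive_id _ _).
rewrite -[c%:A]/(c * 1) mulr1 => H; exact: H.
Qed.

Lemma der_expc (c x : R) : is_derive x 1 (fun s => expR (c * s)) (c * expR (c * x)).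
Proof.
rewrite mulrC; apply: (@is_derive1_comp _ expR (fun s => c * s)).
  exact: der_lin.
Qed.

Lemma cont_expc (c : R) : continuous (fun s => expR (c * s)).
Proof.
move=> x; apply/differentiable_continuous/derivable1_diffP.
by have [] := der_expc c x.
Qed.

Lemma wcont_sum (A : set R) (I : Type) (r : seq I) (P : pred I) (F : I -> R -> R) :
  (forall i, {within A, continuous (F i)}%classic) ->
  {within A, continuous (fun s => \sum_(i <- r | P i) F i s)}%classic.
Proof.
move=> HF; elim: r => [|i r IH].
  under eq_fun do rewrite big_nil.
  by move=> x; apply: cvg_cst.
under eq_fun do rewrite big_cons.
case: (P i); last exact: IH.
by move=> x; apply: continuousD; [exact: HF| exact: IH].
Qed.

Lemma der_sum (x : R) (I : Type) (r : seq I) (P : pred I) (F : I -> R -> R) dF :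
  (forall i, P i -> is_derive x 1 (F i) (dF i)) ->
  is_derive x 1 (fun s => \sum_(i <- r | P i) F i s) (\sum_(i <- r | P i) dF i).
Proof.
move=> HF; elim: r => [|i r IH].
  under eq_fun do rewrite big_nil.
  by rewrite big_nil; apply: is_derive_cst.
under eq_fun do rewrite big_cons.
rewrite big_cons.
case Pi: (P i); last exact: IH.
exact: (@is_deriveD _ _ _ (F i) (fun s => \sum_(j <- r | P j) F j s) x 1 _ _ (HF i Pi) IH).
Qed.


Lemma Lcmp (a b c : R) (y dy : R -> R) : a <= b ->
  {within `[a, b], continuous y}%classic ->
  (forall s, a < s < b -> is_derive s 1 y (dy s) /\ 0 <= dy s + c * y s) ->
  0 <= y a -> 0 <= y b.
Proof.
rewrite le_eqVlt => /orP[/eqP <- //|ab] yc Hd ya.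
pose e := fun s => expR (c * s).
pose phi := fun s => y s * e s.
have dphi : forall s, s \in `]a, b[ ->
    is_derive s 1 phi (e s * (dy s + c * y s)).
  move=> s; rewrite in_itv /= => /Hd [dys _].
  have := @is_deriveM R R y e s 1 (dy s) (c * e s) dys (der_expc c s).
  move=> H; apply: is_derive_eq H _.
  rewrite /GRing.scale /=; lra.
have pc : {within `[a, b], continuous phi}%classic.
  move=> x; apply: continuousM; first exact: yc.
  exact/continuous_subspaceT/cont_expc.
have [xi xiin eq] := MVT ab dphi pc.
have : 0 <= phi b - phi a.
  rewrite eq; apply: mulr_ge0; last by rewrite subr_ge0 ltW.
  apply: mulr_ge0; first exact/ltW/expR_gt0.
  by move: xiin; rewrite in_itv /= => /Hd [].
rewrite subr_ge0 /phi => H.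
have ea := expR_gt0 (c * a); have eb := expR_gt0 (c * b).
have : 0 <= y b * e b by apply: le_trans H; apply: mulr_ge0 => //; exact: ltW.
by rewrite pmulr_lge0.
Qed.


Lemma wsub (a b : R) (y : R -> R) : 0 <= a -> b <= 1 ->
  {within `[0, 1], continuous y}%classic -> {within `[a, b], continuous y}%classic.
Proof.
move=> a0 b1; apply: continuous_subspaceW => z /=.
rewrite !in_itv /= => /andP[az zb]; apply/andP; split.
  exact: le_trans a0 az.
exact: le_trans zb b1.
Qed.

Lemma Lpw (t0 c1 c2 : R) (y dy : R -> R) : 0 <= t0 ->
  {within `[0, 1], continuous y}%classic -> 0 <= y 0 ->
  (forall s, 0 < s < 1 -> s != t0 ->
     is_derive s 1 y (dy s) /\ 0 <= dy s + (if t0 < s then c2 else c1) * y s) ->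
  forall t, 0 <= t <= 1 -> 0 <= y t.
Proof.
move=> t00 yc y0 Hd t /andP[t0' t1].
have [tt0|t0t] := leP t t0.
  apply: (@Lcmp 0 t c1 y dy) => //; first exact: wsub.
  move=> s /andP[s0 st].
  have st0 : s < t0 by exact: lt_le_trans st tt0.
  have [] := Hd s _ _.
  - by rewrite s0 /= (lt_le_trans st t1).
  - by rewrite lt_eqF.
  by move=> d1 d2; split => //; move: d2; rewrite ltNge (ltW st0).
have yt0 : 0 <= y t0.
  apply: (@Lcmp 0 t0 c1 y dy) => //; first by apply: wsub => //; rewrite ltW // (lt_le_trans t0t t1).
  move=> s /andP[s0 st].
  have [] := Hd s _ _.
  - by rewrite s0 /= (lt_trans st (lt_le_trans t0t t1)).
  - by rewrite lt_eqF.
  by move=> d1 d2; split => //; move: d2; rewrite ltNge (ltW st).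
apply: (@Lcmp t0 t c2 y dy) => //; first by rewrite ltW.
  by apply: wsub.
move=> s /andP[s0 st].
have [] := Hd s _ _.
- by rewrite (le_lt_trans t00 s0) /= (lt_le_trans st t1).
- by rewrite gt_eqF.
by move=> d1 d2; split => //; move: d2; rewrite s0.
Qed.

End An.

Section Comb.
Variable R : realType.

Lemma reidx (J : finType) (j : J) (G : {set J} -> R) :
  \sum_(S : {set J} | j \in S) G S = \sum_(T : {set J} | j \notin T) G (j |: T).
Proof.
rewrite (reindex_onto (fun T => j |: T) (fun S => S :\ j)); last first.
  by move=> S jS; rewrite finset.setD1K.
apply: eq_bigl => T; rewrite finset.setU11 /=.
apply/eqP/idP.
  by move=> <-; rewrite finset.setD11.
by move=> jT; rewrite finset.setU1K.
Qed.

Lemma fwd_w (J : finType) (r : {set J} -> J -> R) (q : {set J} -> R)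
    (w : {set J} -> R) :
  \sum_S w S * fwd_rhs r q S =
  \sum_S q S * \sum_(j in ~: S) r S j * (w (j |: S) - w S).
Proof.
rewrite /fwd_rhs.
under eq_bigr do rewrite mulrBr.
rewrite sumrB.
have E : forall S, q S * \sum_(j in ~: S) r S j * (w (j |: S) - w S) =
   q S * \sum_(j in ~: S) r S j * w (j |: S) - w S * (q S * \sum_(j in ~: S) r S j).
  move=> S; under eq_bigr do rewrite mulrBr.
  by rewrite sumrB -mulr_suml; ring.
rewrite (eq_bigr _ (fun S _ => E S)) sumrB; congr (_ - _).
transitivity (\sum_(j : J) \sum_(S : {set J} | j \in S) w S * (q (S :\ j) * r (S :\ j) j)).
  under eq_bigr do rewrite mulr_sumr.
  by rewrite (exchange_big_dep predT).
transitivity (\sum_(j : J) \sum_(T : {set J} | j \notin T) q T * (r T j * w (j |: T))).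
  apply: eq_bigr => j _; rewrite reidx; apply: eq_bigr => T jT.
  by rewrite finset.setU1K //; ring.
under [RHS]eq_bigr do rewrite mulr_sumr.
rewrite (exchange_big_dep predT) //=.
apply: eq_bigr => j _; apply: eq_bigl => T; by rewrite inE.
Qed.


Lemma fwd_mass (J : finType) (r : {set J} -> J -> R) (q : {set J} -> R) :
  \sum_S fwd_rhs r q S = 0.
Proof.
have := fwd_w J r q (fun _ => 1).
under eq_bigr do rewrite mul1r.
move=> ->; apply: big1 => S _.
by rewrite big1 ?mulr0 // => j _; rewrite subrr mulr0.
Qed.

Lemma fwd_u (J : finType) (r : {set J} -> J -> R) (q : {set J} -> R) (u : J) :
  \sum_(S : {set J} | u \in S) fwd_rhs r q S = \sum_(S : {set J} | u \notin S) q S * r S u.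
Proof.
have H := fwd_w J r q (fun S => (u \in S)%:R).
have E2 : \sum_(S : {set J}) (u \in S)%:R * fwd_rhs r q S =
    \sum_(S : {set J}) (if u \in S then fwd_rhs r q S else 0).
  by apply: eq_bigr => S _; case: (u \in S); rewrite ?mul1r ?mul0r.
rewrite E2 in H.
rewrite big_mkcond [RHS]big_mkcond /= H.
apply: eq_bigr => S _.
case uS: (u \in S) => /=.
  by rewrite big1 ?mulr0 // => j _; rewrite in_setU1 uS orbT subrr mulr0.
congr (_ * _).
have uC : u \in ~: S by rewrite finset.in_setC uS.
rewrite (bigD1 u) //= in_setU1 eqxx /= subr0 mulr1 big1 ?addr0 // => j /andP[_ ju].
by rewrite in_setU1 uS orbF eq_sym (negPf ju) subrr mulr0.
Qed.

End Comb.

Section HB.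
Variable R : realType.

Definition mkb (p : bool * bool) : {set bool} := [set b | if b then p.1 else p.2].

Lemma sum_setbool (F : {set bool} -> R) :
  \sum_(S : {set bool}) F S =
  F finset.set0 + F [set true] + F [set false] + F finset.setT.
Proof.
rewrite (reindex mkb); last first.
  exists (fun S : {set bool} => (true \in S, false \in S)).
    by move=> [x y] _; rewrite /mkb !inE.
  by move=> S _; apply/finset.setP => -[]; rewrite !inE.
rewrite -(pair_big xpredT xpredT (fun x y => F (mkb (x, y)))) /=.
rewrite !big_bool /=.
have -> : mkb (true, true) = finset.setT by apply/finset.setP => -[]; rewrite !inE.
have -> : mkb (true, false) = [set true] by apply/finset.setP => -[]; rewrite !inE.
have -> : mkb (false, true) = [set false] by apply/finset.setP => -[]; rewrite !inE.
have -> : mkb (false, false) = finset.set0 by apply/finset.setP => -[]; rewrite !inE.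
ring.
Qed.

End HB.

Section Aux.
Variable R : realType.

Lemma min_mul (g D : R) : 0 <= g -> Order.min (g / D) 1 * D <= g.
Proof.
move=> g0.
have [D0|D0|->] := ltgtP D 0; last by rewrite mulr0.
  have gD : g / D <= 1 by apply: le_trans (_ : 0 <= 1) => //; rewrite mulr_ge0_le0 // invr_le0 ltW.
  by rewrite min_l // divfK ?lt_eqF.
rewrite -ler_pdivlMr //.
by rewrite ge_min lexx.
Qed.


Lemma per_i (I J : finType) (lam : I -> R) (E : I -> J -> bool) (x : I -> J -> R)
    (lab : I -> J -> bool) (t0 : R) (h : R -> {set bool} -> R)
    (p : R -> {set J} -> R) (t : R) (u : J) (i : I) :
  standing_assumption lam E x -> labeling_ok lam E x lab -> 0 <= gbarH h t ->
  \sum_(S : {set J} | u \notin S) p t S = fbarAux p u t ->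
  \sum_(S : {set J} | u \notin S) p t S * (lam i * aux_prob E lab t0 h p t S i u)
  <= (if E i u && lab i u then x i u * \sum_(S : {set J} | u \notin S) p t S else 0) +
     (if E i u && ~~ lab i u then (if t0 < t then x i u * gbarH h t else 0) else 0).
Proof.
move=> [lam0 [x0 [xE [xsum cls]]]] [lab1 lab2] g0 fbE.
rewrite /aux_prob.
case Eiu: (E i u) => /=; last first.
  by rewrite big1 ?addr0 // => S _; rewrite mulr0 mulr0.
have uN : u \in nbrs E i by rewrite /nbrs inE.
case: (cls i) => [fc|[j1 [j2 [j12 [nE [x1 x2]]]]]].
  have labu := lab1 i u fc Eiu; rewrite labu /= addr0.
  case: fc => [j [nE xj]].
  move: uN; rewrite nE inE => /eqP uj; subst j.
  rewrite cards1 eqxx /= xj mulr_sumr le_eqVlt; apply/orP; left; apply/eqP.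
  by apply: eq_bigr => S _; ring.

have c2 : (#|nbrs E i| == 1%N) = false by rewrite nE cards2 j12.
rewrite c2.
have xu : x i u = lam i / 2 by move: uN; rewrite nE !inE => /orP[] /eqP ->.
case labu: (lab i u) => /=.
  rewrite addr0 xu mulr_sumr le_eqVlt; apply/orP; left; apply/eqP.
  by apply: eq_bigr => S _; ring.
rewrite add0r.
case: (ltP t0 t) => tt0; last first.
  by rewrite big1 // => S _; rewrite mulr0 mulr0.
have Ev : forall v, E i v = (v \in [set j1; j2]) by move=> v; rewrite -nE /nbrs inE.
pose v0 := if u == j1 then j2 else j1.
have pv : forall v, (E i v && (v != u)) = (v == v0).
  move=> v; rewrite Ev !inE /v0.
  move: uN; rewrite nE !inE => /orP[] /eqP ->.
    rewrite eqxx; have [->|vj1] := eqVneq v j1.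
      by rewrite /= (negPf j12).
    by rewrite /= andbT.
  rewrite (eq_sym j2 j1) (negPf j12); have [->|vj2] := eqVneq v j2.
    by rewrite /= andbF eq_sym (negPf j12).
  by rewrite /= orbF andbT.
under eq_bigr => S _ do rewrite (big_pred1 v0 pv).
set m := aux_m h p u v0 t.
rewrite (bigID (fun S : {set J} => v0 \in S)) /=.
under eq_bigr => S /andP[_ vS] do rewrite vS.
under [X in _ + X]eq_bigr => S /andP[_ vS] do rewrite (negPf vS).
rewrite -!mulr_suml.
set A := \sum_(S : {set J} | _ && (v0 \in S)) p t S.
have gpE : gpAux p u v0 t = \sum_(S : {set J} | (u \notin S) && (v0 \notin S)) p t S by [].
rewrite -gpE.
have fbE2 : fbarAux p u t = A + gpAux p u v0 t by rewrite -fbE (bigID (fun S : {set J} => v0 \in S)).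
have hm := @min_mul _ (2 * fbarAux p u t - gpAux p u v0 t) g0.
rewrite -/(aux_m h p u v0 t) -/m in hm.
rewrite xu.
apply: le_trans (_ : lam i / 2 * (m * (2 * fbarAux p u t - gpAux p u v0 t)) <= _).
  rewrite fbE2 le_eqVlt; apply/orP; left; apply/eqP; field => //.
by apply: ler_wpM2l => //; rewrite divr_ge0 // ltW.
Qed.


Lemma sum_second (I J : finType) (lam : I -> R) (E : I -> J -> bool) (x : I -> J -> R)
    (lab : I -> J -> bool) (u : J) :
  standing_assumption lam E x -> labeling_ok lam E x lab ->
  \sum_(i | E i u && ~~ lab i u) x i u = ln 2.
Proof.
move=> [_ [_ [xE [xsum _]]]] [_ lab2].
have := xsum u.
rewrite (bigID (fun i => E i u)) /= (bigID (fun i => lab i u)) /= lab2.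
rewrite [X in _ + X]big1; last by move=> i /xE.
lra.
Qed.

Lemma aux_bound (I J : finType) (lam : I -> R) (E : I -> J -> bool) (x : I -> J -> R)
    (lab : I -> J -> bool) (t0 : R) (h : R -> {set bool} -> R)
    (p : R -> {set J} -> R) (t : R) (u : J) :
  standing_assumption lam E x -> labeling_ok lam E x lab -> 0 <= gbarH h t ->
  \sum_(S : {set J}) p t S = 1 ->
  \sum_(S : {set J} | u \notin S) p t S * aux_rate lam E lab t0 h p t S u <=
  (1 - ln 2) * (1 - fAux p u t) + (if t0 < t then ln 2 * gbarH h t else 0).
Proof.
move=> SA LO g0 mass.
have fbE : \sum_(S : {set J} | u \notin S) p t S = fbarAux p u t.
  rewrite /fbarAux /fAux -mass [X in _ = X - _](bigID (fun S : {set J} => u \in S)) /=; lra.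
rewrite /aux_rate.
under eq_bigr do rewrite mulr_sumr.
rewrite exchange_big /=.
apply: le_trans (ler_sum _ (fun i _ => @per_i _ _ _ _ _ _ t0 _ _ _ _ i SA LO g0 fbE)) _.
rewrite big_split /= -big_mkcond -mulr_suml.
have [_ lab2] := LO; rewrite lab2 fbE /fbarAux.
case: (ltP t0 t) => tt0.
  rewrite -big_mkcond /= -mulr_suml (@sum_second _ _ _ _ _ _ u SA LO).
  by [].
by rewrite big1 // => i _; case: (_ && _).
Qed.

End Aux.

Section S. Variable R : realType.
Lemma ln2_le1 : ln (2:R) <= 1.
Proof.
rewrite -ler_expR lnK ?posrE //.
by have := expR_ge1Dx (1:R); rewrite -[1 + 1]/(2%:R).
Qed.
Lemma ln2_gt0 : 0 < ln (2:R).
Proof. by apply: ln_gt0; rewrite ltr1n. Qed.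
End S.

Section E.
Variable R : realType.

Lemma der_B (f g : R -> R) (x df dg : R) : is_derive x 1 f df -> is_derive x 1 g dg ->
  is_derive x 1 (fun s => f s - g s) (df - dg).
Proof. move=> Hf Hg; exact: is_deriveB. Qed.

Lemma der_D (f g : R -> R) (x df dg : R) : is_derive x 1 f df -> is_derive x 1 g dg ->
  is_derive x 1 (fun s => f s + g s) (df + dg).
Proof. move=> Hf Hg; exact: is_deriveD. Qed.

Lemma der_c (x a : R) : is_derive x 1 (fun _ : R => a) 0.
Proof. exact: is_derive_cst. Qed.

Lemma wcB (A : set R) (f g : R -> R) : {within A, continuous f}%classic ->
  {within A, continuous g}%classic -> {within A, continuous (fun s => f s - g s)}%classic.
Proof. by move=> Hf Hg z; apply: continuousB; [exact: Hf|exact: Hg]. Qed.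

Lemma wcD (A : set R) (f g : R -> R) : {within A, continuous f}%classic ->
  {within A, continuous g}%classic -> {within A, continuous (fun s => f s + g s)}%classic.
Proof. by move=> Hf Hg z; apply: continuousD; [exact: Hf|exact: Hg]. Qed.

Lemma wcc (A : set R) (a : R) : {within A, continuous (fun _ : R => a)}%classic.
Proof. by move=> z; apply: cvg_cst. Qed.

Lemma law_mass (J : finType) r (p : R -> {set J} -> R) t0 : 0 <= t0 ->
  is_law r p t0 -> forall t, 0 <= t <= 1 -> \sum_(S : {set J}) p t S = 1.
Proof.
move=> t00 [init [cont der]] t tb.
have c : {within `[0, 1], continuous (fun s => \sum_(S : {set J}) p s S)}%classic.
  exact: wcont_sum.
have d : forall s, 0 < s < 1 -> s != t0 ->
    is_derive s 1 (fun s => \sum_(S : {set J}) p s S) 0.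
  move=> s sb st.
  have := @der_sum R s _ (index_enum _) xpredT (fun S s => p s S)
    (fun S => fwd_rhs (r s) (p s) S) (fun S _ => der S s sb st).
  by rewrite fwd_mass.
have i0 : \sum_(S : {set J}) p 0 S = 1.
  rewrite (eq_bigr _ (fun S _ => init S)) (bigD1 finset.set0) //= eqxx big1 ?addr0 //.
  by move=> S /negPf ->.
apply/eqP; rewrite eq_le; apply/andP; split.
  rewrite -subr_ge0.
  have := @Lpw R t0 0 0 (fun s => 1 - \sum_(S : {set J}) p s S) (fun _ => 0) t00
    (@wcB _ _ _ (wcc _ _) c) _ _ t tb; apply; first by rewrite i0 subrr.
  move=> s sb st; split; last by case: ifP; rewrite mul0r addr0.
  by have := @der_B _ _ _ _ _ (der_c s 1) (d s sb st); rewrite subr0.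
rewrite -subr_ge0.
have := @Lpw R t0 0 0 (fun s => \sum_(S : {set J}) p s S - 1) (fun _ => 0) t00
  (@wcB _ _ _ c (wcc _ _)) _ _ t tb; apply; first by rewrite i0 subrr.
move=> s sb st; split; last by case: ifP; rewrite mul0r addr0.
by have := @der_B _ _ _ _ _ (d s sb st) (der_c s 1); rewrite subr0.
Qed.


Lemma sumT (F : bool -> R) : \sum_(j in [set: bool]) F j = F true + F false.
Proof. by rewrite (eq_bigl xpredT) ?big_bool // => j; rewrite inE. Qed.

Lemma Ct : ~: [set true] = [set false].
Proof. by apply/finset.setP => -[]; rewrite !inE. Qed.
Lemma Cf : ~: [set false] = [set true].
Proof. by apply/finset.setP => -[]; rewrite !inE. Qed.
Lemma Tt : [set: bool] :\ true = [set false].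
Proof. by apply/finset.setP => -[]; rewrite !inE. Qed.
Lemma Tf : [set: bool] :\ false = [set true].
Proof. by apply/finset.setP => -[]; rewrite !inE. Qed.

Lemma fwd0 (r : {set bool} -> bool -> R) q :
  fwd_rhs r q finset.set0 = - (q finset.set0 * (r finset.set0 true + r finset.set0 false)).
Proof. by rewrite /fwd_rhs big_set0 finset.setC0 sumT sub0r. Qed.

Lemma fwdt (r : {set bool} -> bool -> R) q :
  fwd_rhs r q [set true] = q finset.set0 * r finset.set0 true - q [set true] * r [set true] false.
Proof. by rewrite /fwd_rhs big_set1 Ct big_set1 finset.setDv. Qed.

Lemma fwdf (r : {set bool} -> bool -> R) q :
  fwd_rhs r q [set false] = q finset.set0 * r finset.set0 false - q [set false] * r [set false] true.
Proof. by rewrite /fwd_rhs big_set1 Cf big_set1 finset.setDv. Qed.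

Lemma fwdT (r : {set bool} -> bool -> R) q :
  fwd_rhs r q [set: bool] = q [set false] * r [set false] true + q [set true] * r [set true] false.
Proof. by rewrite /fwd_rhs sumT finset.setCT big_set0 mulr0 subr0 Tt Tf. Qed.

Lemma r0E (t0 t : R) (j : bool) : res_rate t0 t finset.set0 j = 1 - ln 2 + (if t0 < t then ln 2 else 0).
Proof. rewrite /res_rate inE; case: ifP => _ //; field => //. Qed.

Lemma rtE (t0 t : R) : res_rate t0 t [set true] false = 1 - ln 2 + (if t0 < t then 2 * ln 2 else 0).
Proof. rewrite /res_rate inE /=; case: ifP => _ //; ring. Qed.

Lemma rfE (t0 t : R) : res_rate t0 t [set false] true = 1 - ln 2 + (if t0 < t then 2 * ln 2 else 0).
Proof. rewrite /res_rate inE /=; case: ifP => _ //; ring. Qed.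


Lemma H_facts (t0 : R) (h : R -> {set bool} -> R) : 0 <= t0 ->
  is_law (res_rate t0) h t0 -> forall t, 0 <= t <= 1 ->
  [/\ 0 <= h t finset.set0, 0 <= h t [set true], 0 <= h t [set false]
     & h t [set true] = h t [set false]].
Proof.
move=> t00 law; have [init [cont der]] := law.
have L0 := ln2_gt0 R; have L1 := ln2_le1 R.
have hE : forall t, 0 <= t <= 1 -> 0 <= h t finset.set0.
  apply: (@Lpw R t0 (2 * (1 - ln 2)) 2 (fun s => h s finset.set0)
    (fun s => fwd_rhs (res_rate t0 s) (h s) finset.set0) t00 (cont _)).
    by rewrite init eqxx.
  move=> s sb st; split; first exact: der.
  by rewrite fwd0 !r0E; case: ifP => _; lra.
have sI : forall s : R, 0 < s < 1 -> 0 <= s <= 1.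
  by move=> s /andP[sa sb]; rewrite (ltW sa) (ltW sb).
have st0 : [set true] != finset.set0.
  by apply/eqP => /finset.setP /(_ true); rewrite !inE.
have sf0 : [set false] != finset.set0.
  by apply/eqP => /finset.setP /(_ false); rewrite !inE.
have hA : forall t, 0 <= t <= 1 -> 0 <= h t [set true].
  apply: (@Lpw R t0 (1 - ln 2) (1 + ln 2) (fun s => h s [set true])
    (fun s => fwd_rhs (res_rate t0 s) (h s) [set true]) t00 (cont _)).
    by rewrite init; case: eqP => // /finset.setP /(_ true); rewrite !inE.
  move=> s sb st; split; first exact: der.
  have := hE s (sI s sb).
  by rewrite fwdt r0E rtE; case: ifP => _; nra.
have hB : forall t, 0 <= t <= 1 -> 0 <= h t [set false].
  apply: (@Lpw R t0 (1 - ln 2) (1 + ln 2) (fun s => h s [set false])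
    (fun s => fwd_rhs (res_rate t0 s) (h s) [set false]) t00 (cont _)).
    by rewrite init; case: eqP => // /finset.setP /(_ false); rewrite !inE.
  move=> s sb st; split; first exact: der.
  have := hE s (sI s sb).
  by rewrite fwdf r0E rfE; case: ifP => _; nra.
have sym1 : forall t, 0 <= t <= 1 -> 0 <= h t [set true] - h t [set false].
  apply: (@Lpw R t0 (1 - ln 2) (1 + ln 2) (fun s => h s [set true] - h s [set false])
    (fun s => fwd_rhs (res_rate t0 s) (h s) [set true] -
              fwd_rhs (res_rate t0 s) (h s) [set false]) t00).
  - exact: wcB.
  - by rewrite !init (negPf st0) (negPf sf0) subrr.
  move=> s sb st; split; first by apply: der_B; apply: der.
  by rewrite fwdt fwdf !r0E rtE rfE; case: ifP => _; lra.
have sym2 : forall t, 0 <= t <= 1 -> 0 <= h t [set false] - h t [set true].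
  apply: (@Lpw R t0 (1 - ln 2) (1 + ln 2) (fun s => h s [set false] - h s [set true])
    (fun s => fwd_rhs (res_rate t0 s) (h s) [set false] -
              fwd_rhs (res_rate t0 s) (h s) [set true]) t00).
  - exact: wcB.
  - by rewrite !init (negPf st0) (negPf sf0) subrr.
  move=> s sb st; split; first by apply: der_B; apply: der.
  by rewrite fwdt fwdf !r0E rtE rfE; case: ifP => _; lra.
move=> t tb; split; [exact: hE|exact: hA|exact: hB|].
have := sym1 t tb; have := sym2 t tb; lra.
Qed.


Lemma init0 (J : finType) (q : {set J} -> R) (u : J) :
  (forall S, q S = (S == finset.set0)%:R) -> \sum_(S : {set J} | u \in S) q S = 0.
Proof.
move=> H; apply: big1 => S uS; rewrite H.
case: eqP => // S0; by rewrite S0 inE in uS.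
Qed.

End E.

Theorem lemma4p3 (R : realType) (I J : finType) (lam : I -> R)
    (E : I -> J -> bool) (x : I -> J -> R) (lab : I -> J -> bool) (t0 : R)
    (h : R -> {set bool} -> R) (p : R -> {set J} -> R) :
  standing_assumption lam E x ->
  labeling_ok lam E x lab ->
  0 <= t0 <= 1 ->
  is_law (res_rate t0) h t0 ->
  is_law (aux_rate lam E lab t0 h p) p t0 ->
  forall (u : J) (t : R), 0 <= t <= 1 -> fAux p u t <= fH h t.
Proof.
move=> SA LO t0b lawH lawP u t tb.
case/andP: t0b => t00 t01.
have HF := @H_facts R t0 h t00 lawH.
have mH := @law_mass R bool _ h t0 t00 lawH.
have mP := @law_mass R J _ p t0 t00 lawP.
have [initH [contH derH]] := lawH.
have [initP [contP derP]] := lawP.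
have sI : forall s : R, 0 < s < 1 -> 0 <= s <= 1.
  by move=> s /andP[sa sb]; rewrite (ltW sa) (ltW sb).
rewrite -subr_ge0.
apply: (@Lpw R t0 (1 - ln 2) (1 - ln 2) (fun s => fH h s - fAux p u s)
  (fun s => \sum_(S : {set bool} | true \in S) fwd_rhs (res_rate t0 s) (h s) S -
            \sum_(S : {set J} | u \in S) fwd_rhs (aux_rate lam E lab t0 h p s) (p s) S)
   t00 _ _ _ t tb).
- by apply: wcB; apply: wcont_sum.
- by rewrite /fH /fAux (@init0 R _ _ _ initH) (@init0 R _ _ _ initP) subrr.
move=> s sb st; split.
  rewrite /fH /fAux; apply: der_B.
    by apply: der_sum => S _; apply: derH.
  by apply: der_sum => S _; apply: derP.
have [hE0 hA0 hB0 sym] := HF s (sI s sb).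
have gbE : gbarH h s = h s finset.set0 + h s [set true] + h s [set false].
  by rewrite /gbarH /gH; have := mH s (sI s sb); rewrite sum_setbool; lra.
have hTE : h s [set: bool] = 1 - h s finset.set0 - h s [set true] - h s [set false].
  by have := mH s (sI s sb); rewrite sum_setbool; lra.
have fHE : fH h s = h s [set true] + h s [set: bool].
  by rewrite /fH big_mkcond sum_setbool !inE /=; ring.
have g0 : 0 <= gbarH h s by rewrite gbE; lra.
have bnd := @aux_bound R I J lam E x lab t0 h p s u SA LO g0 (mP s (sI s sb)).
rewrite -fwd_u in bnd.
rewrite if_same big_mkcond sum_setbool !inE /= fwdt fwdT !r0E rtE rfE.
rewrite fHE hTE gbE -sym in bnd *.
case: ifP bnd => _ bnd; lra.
Qed.
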